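(* Let $G$ be a $(P_7, C_4, \text{diamond})$-free graph, let $v_1v_2\cdots v_7v_1$ be a $7$-hole of $G$, $A=\{v_1,\dots,v_7\}$, indices taken modulo 7. For $i\in\{1,\dots,7\}$ let $X_i=\{x\in N(A): N(x)\cap A=\{v_i,v_{i+3}\}\}$ and $Y_i=\{x\in N(A): N(x)\cap A=\{v_i,v_{i+3},v_{i+4}\}\}$. Then: (a) $N(A)=\bigcup_{i=1}^7 (X_i\cup Y_i)$; (b) $|X_i|\le 1$ and $|Y_i|\le 1$ for every $i$; (c) $N(A)$ is a stable set; (d) for each $i$, either $X_i=\emptyset$ or $X_{i+2}\cup X_{i+5}=\emptyset$; (e) for each $i$, either $Y_i=\emptyset$ or $Y_{i+3}\cup Y_{i+4}=\emptyset$; (f) for each $i$, either $X_i=\emptyset$ or $Y_i\cup Y_{i+1}\cup Y_{i+2}\cup Y_{i+3}=\emptyset$.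
   Context: All graphs are finite and simple. $G$ is $H$-free if it has no induced subgraph isomorphic to $H$; $P_t$, $C_t$ are the path and cycle on $t$ vertices; a diamond is two triangles sharing exactly one edge. A $k$-hole is an induced cycle of length $k$. For $X\subseteq V(G)$, $N(X)$ is the set of vertices outside $X$ having a neighbour in $X$. *)

(* Defs.v *)
From mathcomp Require Import all_boot.
Set Implicit Arguments. Unset Strict Implicit. Unset Printing Implicit Defensive.

(* A finite simple graph: vertex type T : finType, adjacency e : rel T,
   assumed symmetric and irreflexive (hypotheses of the theorem). *)

Definition induced_copy (T : finType) (e : rel T) (n : nat) (adj : rel 'I_n)
  (f : 'I_n -> T) : Prop :=
  injective f /\ forall a b : 'I_n, a != b -> e (f a) (f b) = adj a b.

Definition H_free (T : finType) (e : rel T) (n : nat) (adj : rel 'I_n) : Prop :=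
  ~ exists f : 'I_n -> T, induced_copy e adj f.

Definition P_adj (t : nat) : rel 'I_t :=
  fun a b => (a.+1 == b :> nat) || (b.+1 == a :> nat).

Definition C_adj (t : nat) : rel 'I_t :=
  fun a b => (a != b) && ((a.+1 %% t == b :> nat) || (b.+1 %% t == a :> nat)).

Definition diamond_adj : rel 'I_4 :=
  fun a b => (a != b) &&
    ~~ (((a == 0 :> nat) && (b == 3 :> nat)) || ((a == 3 :> nat) && (b == 0 :> nat))).

(* Index arithmetic modulo 7 (vertices v_1..v_7 relabelled v_0..v_6). *)
Definition idx7 (i : 'I_7) (k : nat) : 'I_7 := inord ((i + k) %% 7).

Definition hole7 (T : finType) (e : rel T) (v : 'I_7 -> T) : Prop :=
  injective v /\
  forall i j : 'I_7, e (v i) (v j) = (j == idx7 i 1) || (i == idx7 j 1).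

Definition nbhd_set (T : finType) (e : rel T) (X : {set T}) : {set T} :=
  [set x | (x \notin X) && [exists y in X, e x y]].

Definition nbrs_in (T : finType) (e : rel T) (x : T) (X : {set T}) : {set T} :=
  [set y in X | e x y].

Definition stable (T : finType) (e : rel T) (S : {set T}) : Prop :=
  forall x y, x \in S -> y \in S -> ~~ e x y.

(* Main.v *)
Require Import Defs.
From mathcomp Require Import all_boot.
From mathcomp Require Import zify.
Set Implicit Arguments. Unset Strict Implicit. Unset Printing Implicit Defensive.

Definition checkn (N n : nat) (gn : nat -> nat -> bool) (adjn : nat -> nat -> bool) (w : seq nat) :=
  (size w == n) && uniq w && all (fun a => a < N) w &&
  all (fun a => all (fun b => (a == b) || (gn (nth 0 w a) (nth 0 w b) == adjn a b)) (iota 0 n)) (iota 0 n).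

Definition c4n (i j : nat) := (i != j) && ((i.+1 %% 4 == j) || (j.+1 %% 4 == i)).
Definition dn (i j : nat) := (i != j) && ~~ (((i == 0) && (j == 3)) || ((i == 3) && (j == 0))).
Definition p7n (i j : nat) := (i.+1 == j) || (j.+1 == i).

Definition fstep N (gm : nat -> nat -> bool) (pat : nat -> nat -> bool) (ws : seq (seq nat)) :=
  flatten [seq [seq rcons w c | c <- [seq c <- iota 0 N | (c \notin w) &&
     all (fun j => gm (nth 0 w j) c == pat j (size w)) (iota 0 (size w))]] | w <- ws].

Definition ffind N gm n pat := iter n (fstep N gm pat) [:: [::]].

Definition tryp N gn n pat :=
  let M := [seq [seq gn a b | b <- iota 0 N] | a <- iota 0 N] in
  let gm a b := nth false (nth [::] M a) b in
  if ffind N gm n pat is w :: _ then checkn N n gn pat w else false.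

Definition bad N gn := tryp N gn 4 c4n || tryp N gn 4 dn || tryp N gn 7 p7n.

Definition hn (a b : nat) := (b == (a + 1) %% 7) || (a == (b + 1) %% 7).

Definition gn (s t : seq bool) (bxy : bool) (a b : nat) : bool :=
  if (a < 7) && (b < 7) then hn a b
  else if a < 7 then (if b == 7 then nth false s a else nth false t a)
  else if b < 7 then (if a == 7 then nth false s b else nth false t b)
  else (a != b) && bxy.

Definition xpat i := [seq (j == i) || (j == (i + 3) %% 7) | j <- iota 0 7].
Definition ypat i := [seq (j == i) || (j == (i + 3) %% 7) || (j == (i + 4) %% 7) | j <- iota 0 7].

Fixpoint allbits n : seq (seq bool) :=
  if n is n'.+1 then [seq b :: s | b <- [:: false; true], s <- allbits n'] else [:: [::]].

Definition pats i := [:: xpat i; ypat i].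

Lemma checkn_sound (T : finType) (e : rel T) N n gn (adjn : nat -> nat -> bool) (adj : rel 'I_n) w (f : nat -> T) :
  (forall a b : 'I_n, a != b -> adj a b = adjn a b) ->
  {in [pred a | a < N] &, injective f} ->
  (forall a b, a < N -> b < N -> a != b -> e (f a) (f b) = gn a b) ->
  checkn N n gn adjn w -> exists h : 'I_n -> T, induced_copy e adj h.
Proof.
move=> hadj finj fe /andP[/andP[/andP[/eqP sw uw] /allP wN] /allP H].
have inw a : a < n -> nth 0 w a \in w by move=> ha; rewrite mem_nth // sw.
exists (fun a => f (nth 0 w a)); split.
- move=> a b /finj; rewrite !inE => /(_ (wN _ (inw _ (ltn_ord a))) (wN _ (inw _ (ltn_ord b)))).
  move/eqP; rewrite nth_uniq ?sw // => /eqP; exact: val_inj.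
- move=> a b ab; rewrite hadj //.
  have ha : val a \in iota 0 n by rewrite mem_iota /=.
  have /allP/(_ b) := H a ha.
  rewrite mem_iota /= ltn_ord => /(_ isT); have -> : (val a == val b) = false by apply/negbTE.
  move=> /= /eqP <-.
  apply: fe; try exact: wN (inw _ (ltn_ord _)).
  by rewrite nth_uniq ?sw.
Qed.

Lemma tryp_sound N gn n pat : tryp N gn n pat -> exists w, checkn N n gn pat w.
Proof. rewrite /tryp /=; case: ffind => [|w ws] //; by exists w. Qed.

Lemma bad_sound (T : finType) (e : rel T)
  (hP7 : H_free e (@P_adj 7)) (hC4 : H_free e (@C_adj 4)) (hD : H_free e diamond_adj)
  N gn (f : nat -> T) :
  {in [pred a | a < N] &, injective f} ->
  (forall a b, a < N -> b < N -> a != b -> e (f a) (f b) = gn a b) ->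
  bad N gn -> False.
Proof.
move=> finj fe; rewrite /bad => /orP[/orP[]|] /tryp_sound [w Hw].
- by apply: hC4; apply: (checkn_sound _ finj fe Hw).
- by apply: hD; apply: (checkn_sound _ finj fe Hw).
- by apply: hP7; apply: (checkn_sound _ finj fe Hw).
Qed.
Lemma C1 : all (fun s => ~~ has id s || has (fun i => (s == xpat i) || (s == ypat i)) (iota 0 7)
    || bad 8 (gn s s false)) (allbits 7).
Proof. vm_cast_no_check (erefl true). Qed.

Lemma C2 : all (fun i => all (fun b => bad 9 (gn (xpat i) (xpat i) b) && bad 9 (gn (ypat i) (ypat i) b)) [:: false; true]) (iota 0 7).
Proof. vm_cast_no_check (erefl true). Qed.

Lemma C3 : all (fun i => all (fun j => all (fun s => all (fun t => bad 9 (gn s t true)) (pats j)) (pats i)) (iota 0 7)) (iota 0 7).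
Proof. vm_cast_no_check (erefl true). Qed.

Definition badpair s t := (s != t) && bad 9 (gn s t false) && bad 9 (gn s t true).

Lemma C4 : all (fun i => badpair (xpat i) (xpat ((i+2)%%7)) && badpair (xpat i) (xpat ((i+5)%%7))
  && badpair (ypat i) (ypat ((i+3)%%7)) && badpair (ypat i) (ypat ((i+4)%%7))
  && all (fun k => badpair (xpat i) (ypat ((i+k)%%7))) (iota 0 4)) (iota 0 7).
Proof. vm_cast_no_check (erefl true). Qed.

Lemma Cpos : all (fun i => has id (xpat i) && has id (ypat i)) (iota 0 7).
Proof. vm_cast_no_check (erefl true). Qed.

Lemma allbitsP n s : size s = n -> s \in allbits n.
Proof.
elim: n s => [|n IH] [|b s] // [hs].
have hb : b \in [:: false; true] by case: b.
exact: (@allpairs_f _ _ _ (fun b s => b :: s) [:: false; true] (allbits n) b s hb (IH _ hs)).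
Qed.

Definition sp (T : finType) (e : rel T) (v : 'I_7 -> T) x := [seq e x (v (inord j)) | j <- iota 0 7].
Definition f9 (T : finType) (v : 'I_7 -> T) (x y : T) (a : nat) :=
  if a < 7 then v (inord a) else if a == 7 then x else y.

Lemma size_sp T e v x : size (@sp T e v x) = 7.
Proof. by rewrite size_map size_iota. Qed.

Lemma nth_spn T e v x (a : nat) : a < 7 -> nth false (@sp T e v x) a = e x (v (inord a)).
Proof. by move=> ha; rewrite (nth_map 0) ?size_iota // nth_iota. Qed.

Lemma nth_sp T e v x (j : 'I_7) : nth false (@sp T e v x) j = e x (v j).
Proof. by rewrite nth_spn // inord_val. Qed.

Lemma idx7E (i : 'I_7) k : (idx7 i k : nat) = (i + k) %% 7.
Proof. by rewrite /idx7 inordK // ltn_pmod. Qed.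

Lemma inord7_eq (b : nat) (i : 'I_7) : b < 7 -> (inord b == i) = (b == (i : nat)).
Proof. by move=> hb; apply/eqP/eqP => [<-|->]; [rewrite inordK | exact: inord_val]. Qed.

Lemma f9_inj (T : finType) (v : 'I_7 -> T) (hvinj : injective v) x y
  (xA : x \notin [set v i | i : 'I_7]) (yA : y \notin [set v i | i : 'I_7]) a b :
  a < 9 -> b < 9 -> f9 v x y a = f9 v x y b -> a = b \/ (x = y /\ 7 <= a /\ 7 <= b).
Proof.
rewrite /f9 => ha9 hb9; case: (ltnP a 7) => ha; case: (ltnP b 7) => hb.
- move/hvinj => /(congr1 (@nat_of_ord 7)); rewrite !inordK //; by left.
- move=> H; exfalso; move: H; case: ifP => _ H.
    by move: xA; rewrite -H imset_f.
  by move: yA; rewrite -H imset_f.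
- move=> H; exfalso; move: H; case: ifP => _ H.
    by move: xA; rewrite H imset_f.
  by move: yA; rewrite H imset_f.
- case: (eqVneq a 7) => a7; case: (eqVneq b 7) => b7.
  + by left; rewrite a7 b7.
  + by move=> ->; right.
  + by move=> ->; right.
  + by left; lia.
Qed.

Lemma f9_adj (T : finType) (e : rel T) (e_sym : symmetric e) (v : 'I_7 -> T)
  (hv : hole7 e v) x y a b :
  a < 9 -> b < 9 -> a != b -> e (f9 v x y a) (f9 v x y b) = gn (sp e v x) (sp e v y) (e x y) a b.
Proof.
rewrite /f9 /gn => ha9 hb9 ab; case: (ltnP a 7) => ha; case: (ltnP b 7) => hb /=.
- rewrite hv.2 /hn !inord7_eq // !idx7E !inordK //.
- by case: ifP => _; rewrite e_sym nth_spn.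
- by case: ifP => _; rewrite nth_spn.
- rewrite ab /=; case: (eqVneq a 7) => a7; case: (eqVneq b 7) => b7 //=.
  all: try by rewrite e_sym.
  all: exfalso; lia.
Qed.

Theorem mainTheorem7 (T : finType) (e : rel T)
  (e_sym : symmetric e) (e_irr : irreflexive e)
  (hP7 : H_free e (@P_adj 7)) (hC4 : H_free e (@C_adj 4))
  (hD : H_free e diamond_adj)
  (v : 'I_7 -> T) (hv : hole7 e v) :
  let A : {set T} := [set v i | i : 'I_7] in
  let NA := nbhd_set e A in
  let X := fun i : 'I_7 =>
    [set x in NA | nbrs_in e x A == [set v i; v (idx7 i 3)]] in
  let Y := fun i : 'I_7 =>
    [set x in NA | nbrs_in e x A == [set v i; v (idx7 i 3); v (idx7 i 4)]] in
  (* (a) *) NA = \bigcup_(i : 'I_7) (X i :|: Y i) /\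
  (* (b) *) (forall i, #|X i| <= 1 /\ #|Y i| <= 1) /\
  (* (c) *) stable e NA /\
  (* (d) *) (forall i, X i = set0 \/ X (idx7 i 2) :|: X (idx7 i 5) = set0) /\
  (* (e) *) (forall i, Y i = set0 \/ Y (idx7 i 3) :|: Y (idx7 i 4) = set0) /\
  (* (f) *) (forall i, X i = set0 \/
               Y i :|: Y (idx7 i 1) :|: Y (idx7 i 2) :|: Y (idx7 i 3) = set0).
Proof.
move=> A NA X Y.
have vinj := hv.1.
have K1 x : x \notin A -> bad 8 (gn (sp e v x) (sp e v x) false) -> False.
  move=> xA; apply: (bad_sound hP7 hC4 hD (f := f9 v x x)).
  - move=> a b; rewrite !inE => ha hb /(f9_inj vinj xA xA (leqW ha) (leqW hb)) [] // [_ [h1 h2]]; lia.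
  - move=> a b ha hb ab; rewrite f9_adj ?e_irr //; lia.
have K2 x y : x \notin A -> y \notin A -> x != y -> bad 9 (gn (sp e v x) (sp e v y) (e x y)) -> False.
  move=> xA yA xy; apply: (bad_sound hP7 hC4 hD (f := f9 v x y)).
  - move=> a b; rewrite !inE => ha hb /(f9_inj vinj xA yA ha hb) [] // [exy _].
    by rewrite exy eqxx in xy.
  - by move=> a b ha hb ab; rewrite f9_adj.
have K3 x y : x \notin A -> y \notin A -> badpair (sp e v x) (sp e v y) -> False.
  move=> xA yA /andP[/andP[st b1] b2].
  have xy : x != y by apply: contraNneq st => ->.
  by apply: (K2 x y xA yA xy); case: (e x y).
have nbrsE x (P : {set 'I_7}) (pl : seq bool) : size pl = 7 ->
    (forall j : 'I_7, (j \in P) = nth false pl j) ->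
    (nbrs_in e x A == [set v j | j in P]) = (sp e v x == pl).
  move=> spl HP.
  have -> : nbrs_in e x A = [set v j | j in [set j | e x (v j)]].
    apply/setP => z; rewrite !inE; apply/andP/imsetP => [[/imsetP [j _ ->] h]|[j]].
      by exists j; rewrite // inE.
    by rewrite inE => h ->; split; rewrite ?imset_f.
  rewrite (inj_eq (imset_inj vinj)); apply/eqP/eqP => [H|H].
    apply: (@eq_from_nth _ false); rewrite ?size_sp // => j hj.
    rewrite nth_spn // -(inordK (hj : j < 7)) -HP -H inE.
    by rewrite inordK.
  by apply/setP => j; rewrite inE HP -H nth_sp.
have memNA x : (x \in NA) = (x \notin A) && has id (sp e v x).
  rewrite /NA /nbhd_set inE; congr (_ && _).
  apply/existsP/hasP => [[y /andP [/imsetP [j _ ->] h]]|[b /mapP [j hj ->] h]].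
    by exists (e x (v j)); rewrite // -nth_sp mem_nth ?size_sp.
  by exists (v (inord j)); rewrite imset_f.
have hasX (i : 'I_7) : has id (xpat i) && has id (ypat i).
  by have /allP := Cpos; apply; rewrite mem_iota /=.
have memX (i : 'I_7) x : (x \in X i) = (x \notin A) && (sp e v x == xpat i).
  rewrite /X inE memNA -andbA; congr (_ && _).
  rewrite [[set v i; _]](_ : _ = [set v j | j in [set i; idx7 i 3]]); last first.
    by rewrite imsetU1 imset_set1.
  rewrite (nbrsE _ _ (xpat i)); last 2 first.
  - by rewrite size_map size_iota.
  - by move=> j; rewrite (nth_map 0) ?size_iota // nth_iota // !inE -!val_eqE /= idx7E.
  case: (eqVneq (sp e v x) (xpat i)) => [->|]; last by rewrite andbF.
  by rewrite andbT; case/andP: (hasX i).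
have memY (i : 'I_7) x : (x \in Y i) = (x \notin A) && (sp e v x == ypat i).
  rewrite /Y inE memNA -andbA; congr (_ && _).
  rewrite [[set v i; _ ; _]](_ : _ = [set v j | j in [set i; idx7 i 3; idx7 i 4]]); last first.
    by rewrite !imsetU !imset_set1.
  rewrite (nbrsE _ _ (ypat i)); last 2 first.
  - by rewrite size_map size_iota.
  - by move=> j; rewrite (nth_map 0) ?size_iota // nth_iota // !inE -!val_eqE /= !idx7E.
  case: (eqVneq (sp e v x) (ypat i)) => [->|]; last by rewrite andbF.
  by rewrite andbT; case/andP: (hasX i).
have classify x : x \in NA -> exists2 i, i < 7 & (sp e v x == xpat i) || (sp e v x == ypat i).
  rewrite memNA => /andP [xA hs].
  have /allP /(_ _ (allbitsP (size_sp e v x))) := C1.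
  case/orP => [/orP [|H]|hb]; first by rewrite hs.
    2: by exfalso; apply: (K1 x xA hb).
  have [i hi H'] := @hasP _ _ (iota 0 7) H.
  by exists i => //; move: hi; rewrite mem_iota.
have notA x : x \in NA -> x \notin A by rewrite memNA => /andP[].
split.
  apply/setP => x; apply/idP/idP => [hx|].
    have [i hi Hi] := classify x hx; have xA := notA x hx.
    apply/bigcupP; exists (inord i) => //.
    by rewrite inE memX memY inordK // xA.
  by case/bigcupP => i _; rewrite !inE => /orP [] /andP [].
split.
  move=> i; split; apply/card_le1_eqP => x y; rewrite ?memX ?memY => /andP[xA /eqP hx] /andP[yA /eqP hy];
  (apply/eqP; apply/negPn/negP => xy; apply: (K2 y x yA xA xy); rewrite hx hy;
   have := allP C2 i; rewrite mem_iota /= ltn_ord => /(_ isT);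
   by case: (e y x) => /and3P [/andP [? ?] /andP [? ?] _]).
split.
  move=> x y hx hy; apply/negP => exy.
  have xy : x != y by apply: contraTneq exy => ->; rewrite e_irr.
  apply: (K2 x y (notA x hx) (notA y hy) xy); rewrite exy.
  have [i hi Hi] := classify x hx; have [j hj Hj] := classify y hy.
  have ii : i \in iota 0 7 by rewrite mem_iota.
  have jj : j \in iota 0 7 by rewrite mem_iota.
  have hxs : sp e v x \in pats i by rewrite /pats !inE.
  have hys : sp e v y \in pats j by rewrite /pats !inE.
  exact: (allP (allP (allP (allP C3 i ii) j jj) _ hxs) _ hys).
have C4i (i : 'I_7) : [&& badpair (xpat i) (xpat ((i+2)%%7)), badpair (xpat i) (xpat ((i+5)%%7)),
  badpair (ypat i) (ypat ((i+3)%%7)), badpair (ypat i) (ypat ((i+4)%%7))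
  & all (fun k => badpair (xpat i) (ypat ((i+k)%%7))) (iota 0 4)].
  have ii : (i : nat) \in iota 0 7 by rewrite mem_iota add0n ltn_ord.
  have := allP C4 i ii; rewrite -!andbA => H.
  exact H.
split.
  move=> i; case: (boolP (X i == set0)) => [/eqP|/set0Pn [x hx0]]; [by left | right].
  move: hx0; rewrite memX => /andP [xA /eqP hx].
  apply/setP => y; rewrite in_set0 in_setU !memX !idx7E; apply/negP => /orP [] /andP [yA /eqP hy];
  apply: (K3 x y xA yA); rewrite hx hy; by case/and5P: (C4i i).
split.
  move=> i; case: (boolP (Y i == set0)) => [/eqP|/set0Pn [x hx0]]; [by left | right].
  move: hx0; rewrite memY => /andP [xA /eqP hx].
  apply/setP => y; rewrite in_set0 in_setU !memY !idx7E; apply/negP => /orP [] /andP [yA /eqP hy];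
  apply: (K3 x y xA yA); rewrite hx hy; by case/and5P: (C4i i).
move=> i; case: (boolP (X i == set0)) => [/eqP|/set0Pn [x hx0]]; [by left | right].
move: hx0; rewrite memX => /andP [xA /eqP hx].
have Hk k : k < 4 -> badpair (xpat i) (ypat ((i + k) %% 7)).
  move=> hk; case/and5P: (C4i i) => _ _ _ _ /allP; apply; by rewrite mem_iota.
apply/setP => y; rewrite in_set0 !in_setU !memY !idx7E; apply/negP => /orP [/orP [/orP []|]|] /andP [yA /eqP hy];
  apply: (K3 x y xA yA); rewrite hx hy.
- by move: (Hk 0 isT); rewrite addn0 modn_small.
- exact: Hk.
- exact: Hk.
- exact: Hk.
Qed.
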